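(* Let $k\ge1$ and $r\ge1$ be integers, let $\Gamma_1,\ldots,\Gamma_k$ be finite nilpotent groups and let $\Gamma$ be an abelian group (written multiplicatively) of rank at most $r$. Let $\varphi:\Gamma_1\times\cdots\times\Gamma_k\to\Gamma$ be a map that is a homomorphism in each variable. Writing $\varphi(\Gamma_1,\ldots,\Gamma_k)=\{\varphi(g_1,\ldots,g_k):g_i\in\Gamma_i\}$, we have \[ \langle\varphi(\Gamma_1,\ldots,\Gamma_k)\rangle\subset\varphi(\Gamma_1,\ldots,\Gamma_k)^r. \]
   Context: The rank of a group is the minimal cardinality of a generating set. For a subset $X$ of a group, $X^r$ denotes the $r$-fold product set $\{x_1\cdots x_r:x_i\in X\}$, and $\langle X\rangle$ the subgroup generated by $X$. A map is a homomorphism in each variable if fixing all but one argument yields a group homomorphism in the remaining argument. *)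

(* Defs.v *)
From HB Require Import structures.
From mathcomp Require Import all_boot all_order all_algebra all_fingroup all_solvable.
Set Implicit Arguments. Unset Strict Implicit. Unset Printing Implicit Defensive.
Import GRing.Theory.
Local Open Scope ring_scope.

(* The abelian group Gamma is modelled as a zmodType (written additively). *)

Definition gen_subgroup (V : zmodType) (X : V -> Prop) : V -> Prop :=
  fun v => forall H : V -> Prop,
    H 0 -> (forall a b, H a -> H b -> H (a - b)) ->
    (forall x, X x -> H x) -> H v.

Definition rank_le (V : zmodType) (r : nat) : Prop :=
  exists s : seq V, (size s <= r)%N /\ forall v, gen_subgroup (fun x => x \in s) v.

Definition prod_set (V : zmodType) (X : V -> Prop) (r : nat) : V -> Prop :=
  fun v => exists f : 'I_r -> V, (forall j, X (f j)) /\ v = \sum_(j < r) f j.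

Definition image_set (k : nat) (gT : 'I_k -> finGroupType) (V : zmodType)
  (phi : (forall i, gT i) -> V) : V -> Prop :=
  fun v => exists g : forall i, gT i, phi g = v.

Definition multihom (k : nat) (gT : 'I_k -> finGroupType) (V : zmodType)
  (phi : (forall i, gT i) -> V) : Prop :=
  forall (i : 'I_k) (g : forall j, gT j) (x y : gT i),
    phi (dfwith g (x * y)%g) = phi (dfwith g x) + phi (dfwith g y).

(* Main.v *)
Require Import Defs.
From HB Require Import structures.
From mathcomp Require Import all_boot all_order all_algebra all_fingroup all_solvable.
From Stdlib Require Import Classical FunctionalExtensionality.
Set Implicit Arguments. Unset Strict Implicit. Unset Printing Implicit Defensive.
Import GRing.Theory.
Local Open Scope ring_scope.


Lemma subsubC (V : zmodType) (a b c d : V) : a - b - (c - d) = (a - c) - (b - d).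
Proof. rewrite !opprB !addrA [a - b + d]addrAC -!addrA; congr (_ + _).
by rewrite [-b - c]addrC addrCA. Qed.

Section Span.
Variable V : zmodType.

Fixpoint span (l : seq V) (v : V) : Prop :=
  match l with [::] => v = 0 | x :: l' => exists c : int, span l' (v - x *~ c) end.

Definition subgrp (G : V -> Prop) := G 0 /\ forall a b, G a -> G b -> G (a - b).

Lemma subgrp_opp G : subgrp G -> forall a, G a -> G (- a).
Proof. by case=> G0 GB a Ga; rewrite -sub0r; apply: GB. Qed.

Lemma subgrp_add G : subgrp G -> forall a b, G a -> G b -> G (a + b).
Proof.
move=> sG a b Ga Gb; rewrite -[b]opprK; apply: sG.2 => //; exact: subgrp_opp.
Qed.

Lemma subgrp_muln G : subgrp G -> forall a n, G a -> G (a *+ n).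
Proof.
move=> sG a n Ga; elim: n => [|n IH]; first by rewrite mulr0n; exact: sG.1.
by rewrite mulrS; apply: subgrp_add.
Qed.

Lemma subgrp_mulz G : subgrp G -> forall a z, G a -> G (a *~ z).
Proof.
move=> sG a [n|n] Ga; first exact: subgrp_muln.
rewrite NegzE mulrNz; apply: subgrp_opp => //; exact: subgrp_muln.
Qed.

Lemma span_subgrp l : subgrp (span l).
Proof.
elim: l => [|x l [IH0 IHB]] /=; first by split=> // a b -> ->; rewrite subr0.
split; first by exists 0; rewrite mulr0z subr0.
move=> a b [c Ha] [d Hb]; exists (c - d).
have -> : a - b - x *~ (c - d) = (a - x *~ c) - (b - x *~ d).
  by rewrite mulrzBr subsubC.
exact: IHB.
Qed.

Lemma span_min G l : subgrp G -> (forall x, x \in l -> G x) -> forall v, span l v -> G v.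
Proof.
move=> sG; elim: l => [|x l IH] Hl v /=; first by move=> ->; exact: sG.1.
case=> c Hc.
have -> : v = (v - x *~ c) + x *~ c by rewrite subrK.
apply: subgrp_add => //; last by apply: subgrp_mulz => //; apply: Hl; rewrite inE eqxx.
apply: (IH _ _ Hc) => y Hy; apply: Hl; by rewrite inE Hy orbT.
Qed.

Lemma span_mem l x : x \in l -> span l x.
Proof.
elim: l => [|y l IH] //= ; rewrite inE => /orP [/eqP ->|Hx].
  by exists 1; rewrite mulr1z subrr; exact: (span_subgrp l).1.
by exists 0; rewrite mulr0z subr0; exact: IH.
Qed.

End Span.


Lemma ex_minP (P : nat -> Prop) : (exists n, P n) -> exists n, P n /\ forall m, P m -> (n <= m)%N.
Proof.
move=> [n0 Pn]; apply: NNPP => Hno.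
have H : forall n m, (m <= n)%N -> ~ P m.
  move=> {Pn} {}n; elim: n => [|n IH] m.
    rewrite leqn0 => /eqP -> P0; apply: Hno; exists 0%N; split=> // m' _.
  rewrite leq_eqVlt => /orP [/eqP ->|]; last exact: IH.
  move=> Pn1; apply: Hno; exists n.+1; split=> // m' Pm'.
  rewrite leqNgt; apply/negP => lt; exact: (IH m' lt).
exact: (H n0 n0 (leqnn n0)).
Qed.

Lemma rearr1 (V : zmodType) (a b c d : V) : a - b - c = (a - (d + c)) - (b - d).
Proof. by rewrite [d + c]addrC opprD addrA opprB addrA subrK addrAC. Qed.

Section Gen.
Variable V : zmodType.

Lemma gen_subgrp (X : V -> Prop) : subgrp (gen_subgroup X).
Proof.
split; first by move=> H H0 _ _.
move=> a b Ga Gb; rewrite /gen_subgroup => H H0 HS HX. exact: (HS a b (Ga H H0 HS HX) (Gb H H0 HS HX)).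
Qed.

Lemma gen_in (X : V -> Prop) x : X x -> gen_subgroup X x.
Proof. by move=> Xx H _ _ HX; apply: HX. Qed.

Lemma gen_min (X G : V -> Prop) : subgrp G -> (forall x, X x -> G x) ->
  forall v, gen_subgroup X v -> G v.
Proof. by move=> [G0 GB] HX v Hv; apply: Hv. Qed.

Lemma subgrp_span (s : seq V) : forall (H : V -> Prop), subgrp H -> (forall h, H h -> span s h) ->
  exists a : seq V, size a = size s /\ (forall x, x \in a -> H x) /\ (forall h, H h -> span a h).
Proof.
elim: s => [|x s IH] H sH Hs.
  exists [::]; split=> //; split=> // h Hh; exact: Hs.
pose I (c : int) := exists h, H h /\ span s (h - x *~ c).
have [[n [n0 In]]|Hno] := classic (exists n : nat, (0 < n)%N /\ I n%:Z).
- have [m [[m0 [h0 [Hh0 Sh0]]] mmin]] :=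
     ex_minP (P := fun n => (0 < n)%N /\ I n%:Z) (ex_intro _ n (conj n0 In)).
  pose H' h := H h /\ span s h.
  have sH' : subgrp H'.
    split; first by split; [exact: sH.1 | exact: (span_subgrp s).1].
    by move=> a b [Ha Sa] [Hb Sb]; split; [exact: sH.2 | exact: (span_subgrp s).2].
  have [a' [sza' [Ha' Sa']]] := IH H' sH' (fun h Hh => Hh.2).
  exists (h0 :: a'); split; first by rewrite /= sza'.
  split.
    move=> y; rewrite inE => /orP [/eqP ->|ya] //; exact: (Ha' y ya).1.
  move=> h Hh; have [c Sc] := Hs h Hh.
  have m0' : (m%:Z != 0) by rewrite eqz_nat -lt0n.
  have [q [rr [Hdiv [rge rlt]]]] : exists q rr, c = q * m%:Z + rr /\ 0 <= rr /\ rr < m%:Z.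
    exists (c %/ m%:Z)%Z, (c %% m%:Z)%Z; split; first exact: divz_eq.
    by split; [exact: modz_ge0 | have := ltz_mod c m0'].
  have Hhq : H (h - h0 *~ q) by apply: sH.2 => //; exact: subgrp_mulz.
  have Srr : span s ((h - h0 *~ q) - x *~ rr).
    have -> : (h - h0 *~ q) - x *~ rr = (h - x *~ c) - (h0 - x *~ m%:Z) *~ q.
      by rewrite Hdiv mulrzDr mulrzBl -mulrzA [m%:Z * q]mulrC -rearr1.
    apply: (span_subgrp s).2 => //; exact: subgrp_mulz (span_subgrp s) _ _ Sh0.
  have rr0 : rr = 0.
    clear Hdiv; move: rge rlt Srr; case: rr => [r|r] //= _ rlt Srr.
    case: r Srr rlt => [|r] Srr rlt //.
    have := mmin r.+1 (conj (ltn0Sn _) (ex_intro _ _ (conj Hhq Srr))).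
    by rewrite leqNgt -ltz_nat rlt.
  exists q; apply: Sa'; split=> //.
  by move: Srr; rewrite rr0 mulr0z subr0.
- have Hs' : forall h, H h -> span s h.
    move=> h Hh; have [c Sc] := Hs h Hh.
    case: c Sc => [[|n]|n] Sc; first by move: Sc; rewrite mulr0z subr0.
      by exfalso; apply: Hno; exists n.+1; split=> //; exists h.
    exfalso; apply: Hno; exists n.+1; split=> //; exists (- h); split.
      exact: subgrp_opp.
    have -> : - h - x *~ (Posz n.+1) = - (h - x *~ Negz n).
      by rewrite NegzE mulrNz opprK opprD.
    exact: subgrp_opp (span_subgrp s) _ Sc.
  have [a' [sza' [Ha' Sa']]] := IH H sH Hs'.
  exists (0 :: a'); split; first by rewrite /= sza'.
  split; first by move=> y; rewrite inE => /orP [/eqP ->|ya]; [exact: sH.1 | exact: Ha'].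
  by move=> h Hh; exists 0; rewrite mulr0z subr0; exact: Sa'.
Qed.

End Gen.


Section Prod.
Variable V : zmodType.

Lemma prod_cons (Y : V -> Prop) n x w : Y x -> prod_set Y n w -> prod_set Y n.+1 (x + w).
Proof.
move=> Yx [f [Yf ->]].
exists (fun j => match unlift ord0 j with Some i => f i | None => x end); split.
  by move=> j; case: (unlift ord0 j).
rewrite big_ord_recl unlift_none; congr (_ + _).
by apply: eq_bigr => i _; rewrite liftK.
Qed.

Lemma prod_pad (Y : V -> Prop) n m v : Y 0 -> (n <= m)%N -> prod_set Y n v -> prod_set Y m v.
Proof.
move=> Y0; elim: m => [|m IH]; first by rewrite leqn0 => /eqP ->.
rewrite leq_eqVlt => /orP [/eqP -> //|]; rewrite ltnS => nm Pv.
by rewrite -[v]add0r; apply: prod_cons => //; exact: IH.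
Qed.

Lemma prod0 (Y : V -> Prop) : prod_set Y 0 0.
Proof. by exists (fun _ => 0); split; [case | rewrite big_ord0]. Qed.

Lemma span_prod (Y : V -> Prop) ys : (forall y, y \in ys -> Y y) ->
  (forall y z, Y y -> Y (y *~ z)) -> forall v, span ys v -> prod_set Y (size ys) v.
Proof.
move=> Hys Yz; elim: ys Hys => [|y ys IH] Hys v /=; first by move=> ->; exact: prod0.
case=> c Sc; rewrite -(subrK (y *~ c) v) addrC; apply: prod_cons.
  by apply: Yz; apply: Hys; rewrite inE eqxx.
by apply: IH => // x xs; apply: Hys; rewrite inE xs orbT.
Qed.

End Prod.

Section PLemma.
Variable V : zmodType.
Variable Y : V -> Prop.
Variable p m : nat.
Hypothesis pr : prime p.
Hypothesis Y0 : Y 0.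
Hypothesis Yz : forall x z, Y x -> Y (x *~ z).
Hypothesis Ykill : forall x, Y x -> x *+ (p ^ m) = 0.

Let A := gen_subgroup Y.

Lemma A_kill v : A v -> v *+ (p ^ m) = 0.
Proof.
move=> Av; apply: (gen_min (G := fun v => v *+ p ^ m = 0)) Av => //.
split; first exact: mul0rn.
by move=> a b Ha Hb; rewrite mulrnBl Ha Hb subrr.
Qed.

Definition Sp (L : seq V) v := exists s u, span L s /\ A u /\ v = s + u *+ p.

Lemma S_subgrp L : subgrp (Sp L).
Proof.
split.
  exists 0, 0; split; first exact: (span_subgrp L).1.
  by split; [exact: (gen_subgrp Y).1 | rewrite mul0rn addr0].
move=> a b [s1 [u1 [S1 [A1 ->]]]] [s2 [u2 [S2 [A2 ->]]]].
exists (s1 - s2), (u1 - u2); split; first exact: (span_subgrp L).2.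
split; first exact: (gen_subgrp Y).2.
by rewrite mulrnBl opprD addrACA.
Qed.

Lemma S_mem L x : x \in L -> Sp L x.
Proof.
move=> xL; exists x, 0; split; first exact: span_mem.
by split; [exact: (gen_subgrp Y).1 | rewrite mul0rn addr0].
Qed.

Lemma S_pA L u : A u -> Sp L (u *+ p).
Proof. by move=> Au; exists 0, u; split; [exact: (span_subgrp L).1|rewrite add0r]. Qed.

Lemma S_span L v : span L v -> Sp L v.
Proof.
move=> Sv; exists v, 0; split=> //.
by split; [exact: (gen_subgrp Y).1 | rewrite mul0rn addr0].
Qed.

Lemma S_mono L1 L2 : (forall x, x \in L1 -> Sp L2 x) -> forall v, Sp L1 v -> Sp L2 v.
Proof.
move=> H v [s [u [Ss [Au ->]]]]; apply: subgrp_add; first exact: S_subgrp.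
  exact: span_min (S_subgrp L2) H _ Ss.
exact: S_pA.
Qed.

Lemma S_perm L1 L2 : (forall x, x \in L1 -> x \in L2) -> forall v, Sp L1 v -> Sp L2 v.
Proof. by move=> H; apply: S_mono => x /H; exact: S_mem. Qed.


Lemma A_Y y : Y y -> A y.
Proof. exact: gen_in. Qed.

Lemma stein l : forall w, (forall x, x \in l -> A x) ->
  (forall v, A v -> Sp (l ++ w) v) ->
  exists ys, size ys = size l /\ (forall y, y \in ys -> Y y) /\ (forall v, A v -> Sp (ys ++ w) v).
Proof.
elim: l => [|a1 l IH] w Hl HS; first by exists [::].
have Aa1 : A a1 by apply: Hl; rewrite inE eqxx.
have Hl' : forall x, x \in l -> A x by move=> x xl; apply: Hl; rewrite inE xl orbT.
have [Hall|Hno] := classic (forall y, Y y -> Sp (l ++ w) y).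
  have HS' : forall v, A v -> Sp (l ++ w) v.
    by move=> v Av; apply: (gen_min (G := Sp (l ++ w))) Av => //; exact: S_subgrp.
  have [ys' [sz [Yys HSys]]] := IH w Hl' HS'.
  exists (0 :: ys'); split; first by rewrite /= sz.
  split; first by move=> y; rewrite inE => /orP [/eqP ->|/Yys].
  move=> v Av; apply: (S_perm (L1 := ys' ++ w)); last exact: HSys.
  by move=> x xL; rewrite /= inE xL orbT.
have [y Hy] := not_all_ex_not _ _ Hno.
have [Yy nSy] := imply_to_and _ _ Hy.
have [s [u [Ss [Au Ey]]]] := HS y (A_Y Yy).
have [c Sc] := Ss.
have [pc|npc] := boolP ((p%:Z %| c)%Z).
  exfalso; apply: nSy.
  have [t Ect] := dvdzP pc; rewrite Ect in Sc.
  exists (s - a1 *~ (t * p%:Z)), (a1 *~ t + u); split=> //.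
  split; first by apply: (subgrp_add (gen_subgrp Y)) => //; exact: (subgrp_mulz (gen_subgrp Y)).
  by rewrite Ey mulrzA -pmulrn mulrnDl addrA subrK.
have cop : coprimez p%:Z c.
  by rewrite coprimezE /= prime_coprime // -dvdzE.
have [uu [vv Huv]] := Bezoutz p%:Z c.
move: Huv; rewrite (eqP cop) => Huv.
set L := l ++ w.
have Sa1 : Sp (y :: L) a1.
  have -> : a1 = (y - u *+ p - (s - a1 *~ c)) *~ vv + (a1 *+ p) *~ uu.
    rewrite Ey addrK opprB addrCA subrr addr0 pmulrn -!mulrzA.
    by rewrite -mulrzDr [c * vv]mulrC [_ * uu]mulrC addrC Huv mulr1z.
  have sG := S_subgrp (y :: L).
  apply: (subgrp_add sG); apply: (subgrp_mulz sG); last exact: S_pA.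
  apply: sG.2; last first.
    apply: (S_perm (L1 := L)); first by move=> x xL; rewrite inE xL orbT.
    exact: S_span.
  apply: sG.2; first by apply: S_mem; rewrite inE eqxx.
  exact: S_pA.
have HS2 : forall v, A v -> Sp (l ++ y :: w) v.
  move=> v Av; apply: (S_perm (L1 := y :: L)).
    by move=> x; rewrite /L !(inE, mem_cat) => /orP [->|/orP [->|->]]; rewrite ?orbT.
  apply: (S_mono (L1 := a1 :: L)); last exact: HS.
  move=> x; rewrite inE => /orP [/eqP -> //|xL].
  by apply: S_mem; rewrite inE xL orbT.
have [ys' [sz [Yys HSys]]] := IH (y :: w) Hl' HS2.
exists (y :: ys'); split; first by rewrite /= sz.
split; first by move=> z; rewrite inE => /orP [/eqP ->|/Yys].
move=> v Av; apply: (S_perm (L1 := ys' ++ y :: w)); last exact: HSys.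
by move=> x; rewrite /= !(inE, mem_cat) => /orP [->|/orP [->|->]]; rewrite ?orbT.
Qed.


Lemma plemma (s : seq V) r : (size s <= r)%N -> (forall v, span s v) ->
  forall v, A v -> prod_set Y r v.
Proof.
move=> szs Hs.
have [a [sza [Ha HAa]]] := subgrp_span (gen_subgrp Y) (fun h _ => Hs h).
have HS0 : forall v, A v -> Sp (a ++ [::]) v by move=> v Av; rewrite cats0; exact: S_span (HAa v Av).
have [ys [szy [Yys HSy]]] := stein Ha HS0.
have It : forall n v, A v -> exists s u, span ys s /\ A u /\ v = s + u *+ (p ^ n).
  elim=> [|n IH] v Av.
    exists 0, v; split; first exact: (span_subgrp ys).1.
    by split=> //; rewrite expn0 mulr1n add0r.
  have [s1 [u1 [S1 [A1 ->]]]] := IH v Av.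
  have := HSy u1 A1; rewrite cats0 => -[s2 [u2 [S2 [A2 ->]]]].
  exists (s1 + s2 *+ (p ^ n)), u2; split.
    apply: (subgrp_add (span_subgrp ys)) => //; exact: (subgrp_muln (span_subgrp ys)).
  split=> //; rewrite mulrnDl addrA; congr (_ + _).
  by rewrite -mulrnA expnS mulnC.
move=> v Av; have [s1 [u1 [S1 [A1 ->]]]] := It m v Av.
rewrite (A_kill A1) addr0; apply: (prod_pad Y0 (n := size ys)).
  by rewrite szy sza.
exact: span_prod.
Qed.

End PLemma.


Lemma killed_mod (V : zmodType) (x : V) d n m :
  x *+ d = 0 -> n = m %[mod d] -> x *+ n = x *+ m.
Proof.
move=> xd nm; rewrite (divn_eq n d) (divn_eq m d) !mulrnDr nm.
by rewrite ![x *+ (_ * d)]mulrnA -![x *+ _ *+ d]mulrnAC xd !mul0rn.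
Qed.

Lemma killed_dvd (V : zmodType) (x : V) d n : x *+ d = 0 -> (d %| n)%N -> x *+ n = 0.
Proof. by move=> xd /dvdnP [t ->]; rewrite mulrnA -mulrnAC xd mul0rn. Qed.

Lemma mulrz_killed (V : zmodType) (x : V) d z : x *+ d = 0 -> (x *~ z) *+ d = 0.
Proof. by move=> xd; rewrite pmulrn -mulrzA mulrC mulrzA -pmulrn xd mul0rz. Qed.

Definition good (N d : nat) := exists e : nat, e = 1 %[mod d] /\ (N %| d * e)%N.

Section Abs.
Variable V : zmodType.
Variable X : V -> Prop.
Variables (N r : nat) (s : seq V).
Hypothesis N0 : (0 < N)%N.
Hypothesis X0 : X 0.
Hypothesis Xz : forall x z, X x -> X (x *~ z).
Hypothesis XN : forall x, X x -> x *+ N = 0.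
Hypothesis szs : (size s <= r)%N.
Hypothesis Hs : forall v, span s v.
Hypothesis Xcomb : forall d1 d2 x y, good N d1 -> good N d2 -> coprime d1 d2 ->
  X x -> x *+ d1 = 0 -> X y -> y *+ d2 = 0 -> X (x + y).

Definition Yd d x := X x /\ x *+ d = 0.

Lemma claim n : forall d, (d <= n)%N -> (0 < d)%N -> good N d ->
  forall v, gen_subgroup (Yd d) v -> prod_set (Yd d) r v.
Proof.
elim: n => [|n IH] d dn d0 gd v Gv; first by move: d0; rewrite lt0n -leqn0 dn.
have Yd0 : Yd d 0 by split=> //; exact: mul0rn.
have [d1E|d1] := eqVneq d 1%N.
  have -> : v = 0.
    apply: (gen_min (G := fun v => v = 0)) Gv; first by split=> // a b -> ->; rewrite subr0.
    by move=> x [_]; rewrite d1E mulr1n.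
  apply: (prod_pad Yd0 (n := 0%N)) => //; exact: prod0.
have d1' : (1 < d)%N by rewrite ltn_neqAle eq_sym d1 d0.
set p := pdiv d.
have pr : prime p := pdiv_prime d1'.
set q1 := (d`_p)%N; set q2 := (d`_p^')%N.
have Eq : (q1 * q2 = d)%N by exact: partnC.
have cop : coprime q1 q2 by exact: coprime_partC.
have [q21|q2n1] := eqVneq q2 1%N.
  have dE : d = (p ^ logn p d)%N by rewrite -p_part -/q1 -Eq q21 muln1.
  apply: (plemma (p := p) (m := logn p d) pr Yd0 _ _ szs Hs) => //.
    by move=> x z [Xx xd]; split; [exact: Xz | exact: mulrz_killed].
  by move=> x [_]; rewrite -dE.
have q2gt0 : (0 < q2)%N by exact: part_gt0.
have q2gt1 : (1 < q2)%N by rewrite ltn_neqAle eq_sym q2n1 q2gt0.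
have q1gt1 : (1 < q1)%N by rewrite p_part_gt1 pi_pdiv.
have q1lt : (q1 < d)%N by rewrite -Eq ltn_Pmulr // ltnW.
have q2lt : (q2 < d)%N by rewrite -Eq ltn_Pmull // ltnW.
set e1 := chinese q1 q2 1 0; set e2 := chinese q1 q2 0 1.
have e1m1 : e1 = 1 %[mod q1] by exact: chinese_modl.
have e1m2 : (q2 %| e1)%N by rewrite /dvdn /e1 chinese_modr // mod0n.
have e2m1 : (q1 %| e2)%N by rewrite /dvdn /e2 chinese_modl // mod0n.
have e2m2 : e2 = 1 %[mod q2] by exact: chinese_modr.
have [e [em Ne]] := gd.
have g1 : good N q1.
  exists (e * e1)%N; split.
    rewrite -modnMm e1m1 modnMm muln1 -(modn_dvdm _ (dvdn_part _ _)) em.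
    by rewrite (modn_dvdm _ (dvdn_part _ _)).
  apply: dvdn_trans Ne _; rewrite -Eq -mulnA; apply: dvdn_mul => //.
  by rewrite [(q2 * e)%N]mulnC; exact: dvdn_mul.
have g2 : good N q2.
  exists (e * e2)%N; split.
    rewrite -modnMm e2m2 modnMm muln1 -(modn_dvdm _ (dvdn_part _ _)) em.
    by rewrite (modn_dvdm _ (dvdn_part _ _)).
  apply: dvdn_trans Ne _; rewrite -Eq [(q1 * q2)%N]mulnC -mulnA; apply: dvdn_mul => //.
  by rewrite [(q1 * e)%N]mulnC; exact: dvdn_mul.
have Hsplit : exists u w, gen_subgroup (Yd q1) u /\ gen_subgroup (Yd q2) w /\ v = u + w.
  pose G v := exists u w, gen_subgroup (Yd q1) u /\ gen_subgroup (Yd q2) w /\ v = u + w.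
  apply: (gen_min (G := G)) Gv.
    split.
      by exists 0, 0; split; [exact: (gen_subgrp _).1 | split; [exact: (gen_subgrp _).1 | rewrite addr0]].
    move=> a b [u1 [w1 [U1 [W1 ->]]]] [u2 [w2 [U2 [W2 ->]]]].
    exists (u1 - u2), (w1 - w2); split; first exact: (gen_subgrp _).2.
    by split; [exact: (gen_subgrp _).2 | rewrite opprD addrACA].
  move=> x [Xx xd]; exists (x *+ e1), (x *+ e2); split.
    apply: gen_in; split; first by rewrite pmulrn; exact: Xz.
    by rewrite -mulrnA; apply: (killed_dvd xd); rewrite -Eq mulnC dvdn_mul.
  split.
    apply: gen_in; split; first by rewrite pmulrn; exact: Xz.
    by rewrite -mulrnA; apply: (killed_dvd xd); rewrite -Eq dvdn_mul.
  rewrite -mulrnDr -{1}(mulr1n x); apply: (killed_mod xd); rewrite -Eq.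
  apply/eqP; rewrite chinese_remainder //; apply/andP; split; apply/eqP.
    by rewrite -modnDm e1m1 (eqP e2m1) addn0 modn_mod.
  by rewrite -modnDm e2m2 (eqP e1m2) add0n modn_mod.
have [u [w [Gu [Gw ->]]]] := Hsplit.
have q1n : (q1 <= n)%N by rewrite -ltnS (leq_trans q1lt dn).
have q2n : (q2 <= n)%N by rewrite -ltnS (leq_trans q2lt dn).
have [f1 [Yf1 ->]] := IH q1 q1n (ltnW q1gt1) g1 u Gu.
have [f2 [Yf2 ->]] := IH q2 q2n (ltnW q2gt1) g2 w Gw.
exists (fun j => f1 j + f2 j); split; last by rewrite big_split.
move=> j; have [Xf1 f1k] := Yf1 j; have [Xf2 f2k] := Yf2 j; split.
  exact: (Xcomb g1 g2 cop Xf1 f1k Xf2 f2k).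
by rewrite mulrnDl -Eq !mulrnA f1k mul0rn -mulrnAC f2k mul0rn addr0.
Qed.


Lemma abstract_main v : gen_subgroup X v -> prod_set X r v.
Proof.
move=> Gv.
have gN : good N N by exists 1%N; split=> //; rewrite muln1.
have Gv' : gen_subgroup (Yd N) v.
  apply: (gen_min (G := gen_subgroup (Yd N))) Gv; first exact: gen_subgrp.
  by move=> x Xx; apply: gen_in; split=> //; exact: XN.
have [f [Yf ->]] := claim (leqnn N) N0 gN Gv'.
by exists f; split=> // j; exact: (Yf j).1.
Qed.

End Abs.


Lemma killed_coprime (V : zmodType) (x : V) P Q :
  x *+ P = 0 -> x *+ Q = 0 -> coprime P Q -> x = 0.
Proof.
move=> xP xQ; case: Q xQ => [|Q] xQ.
  by rewrite /coprime gcdn0 => /eqP P1; rewrite -(mulr1n x) -P1.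
move=> cop; have [a _ Hd] := Bezoutl P (ltn0Sn Q).
move: Hd; rewrite gcdnC (eqP cop) => Hd.
have : x *+ (1 + a * P) = 0 := killed_dvd xQ Hd.
by rewrite mulrnDr mulr1n mulrnA -mulrnAC xP mul0rn addr0.
Qed.

Lemma expg_dvd (gT : finGroupType) (x : gT) a b : (x ^+ a = 1)%g -> (a %| b)%N -> (x ^+ b = 1)%g.
Proof. by move=> xa /dvdnP [t ->]; rewrite mulnC expgM xa expg1n. Qed.

Section Phi.
Variable k : nat.
Variable gT : 'I_k -> finGroupType.
Variable V : zmodType.
Variable phi : (forall i, gT i) -> V.
Hypothesis hk : (0 < k)%N.
Hypothesis Hm : multihom phi.

Let i0 : 'I_k := Ordinal hk.

Lemma dfwith_id (g : forall i, gT i) i : dfwith g (g i) = g.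
Proof.
apply: functional_extensionality_dep => j.
by have [<-|ne] := eqVneq i j; [rewrite dfwith_in | rewrite dfwith_out].
Qed.

Lemma phi1 (g : forall i, gT i) i : phi (dfwith g (1%g : gT i)) = 0.
Proof.
have := @Hm i g 1%g 1%g; rewrite mulg1 => H.
by have := congr1 (fun z => z - phi (dfwith g (1%g : gT i))) H; rewrite addrK subrr.
Qed.

Lemma phiX (g : forall i, gT i) i (x : gT i) n :
  phi (dfwith g (x ^+ n)%g) = phi (dfwith g x) *+ n.
Proof.
elim: n => [|n IH]; first by rewrite expg0 mulr0n phi1.
by rewrite expgS Hm IH mulrS.
Qed.

Lemma phiV (g : forall i, gT i) i (x : gT i) :
  phi (dfwith g (x^-1)%g) = - phi (dfwith g x).
Proof.
have := @Hm i g x^-1%g x; rewrite mulVg phi1 => /esym/eqP.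
by rewrite addr_eq0 => /eqP.
Qed.

Let X := image_set phi.

Lemma X0 : X 0.
Proof.
exists (fun j => 1%g).
by rewrite -(dfwith_id (fun j => 1%g) i0) phi1.
Qed.

Lemma Xz x z : X x -> X (x *~ z).
Proof.
move=> [g <-]; case: z => n.
  by exists (dfwith g (g i0 ^+ n)%g); rewrite phiX dfwith_id pmulrn.
exists (dfwith g ((g i0 ^+ n.+1)^-1)%g).
by rewrite phiV phiX dfwith_id NegzE mulrNz pmulrn.
Qed.

Definition NN := (\prod_(i < k) #|gT i|)%N.

Lemma NN0 : (0 < NN)%N.
Proof. by apply: prodn_gt0 => i; apply/card_gt0P; exists 1%g. Qed.

Lemma expN j (x : gT j) : (x ^+ NN = 1)%g.
Proof.
have := expg_cardG (in_setT x); rewrite cardsT => H.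
apply: expg_dvd H _; rewrite /NN (bigD1 j) //=; exact: dvdn_mulr.
Qed.

Lemma XN x : X x -> x *+ NN = 0.
Proof. by move=> [g <-]; rewrite -(dfwith_id g i0) -phiX expN phi1. Qed.

Lemma vanish (t : forall i, gT i) j0 j1 P Q :
  (t j0 ^+ P = 1)%g -> (t j1 ^+ Q = 1)%g -> coprime P Q -> phi t = 0.
Proof.
move=> H0 H1; apply: killed_coprime.
  by rewrite -(dfwith_id t j0) -phiX H0 phi1.
by rewrite -(dfwith_id t j1) -phiX H1 phi1.
Qed.

Lemma ltS_neq (j : 'I_k) m (hm : (m < k)%N) : j != Ordinal hm -> (j < m.+1)%N = (j < m)%N.
Proof.
move=> ne; rewrite ltnS leq_eqVlt.
have -> : (nat_of_ord j == m) = false.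
  by apply/negbTE; apply: contra ne => /eqP e; apply/eqP/val_inj.
done.
Qed.

Lemma phi_pow (g : forall i, gT i) e : phi (fun j => g j ^+ e)%g = phi g *+ (e ^ k).
Proof.
have H : forall m, (m <= k)%N -> phi (fun j : 'I_k => if (j < m)%N then g j ^+ e else g j)%g = phi g *+ (e ^ m).
  elim=> [|m IH] mk.
    rewrite expn0 mulr1n. have -> : (fun j : 'I_k => if (j < 0)%N then g j ^+ e else g j)%g = g.
    by apply: functional_extensionality_dep.
    done.
  have hm : (m < k)%N := mk.
  set c := (fun j : 'I_k => if (j < m)%N then g j ^+ e else g j)%g.
  have -> : (fun j : 'I_k => if (j < m.+1)%N then g j ^+ e else g j)%g = dfwith c (c (Ordinal hm) ^+ e)%g.
    apply: functional_extensionality_dep => j.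
    have [<-|ne] := eqVneq (Ordinal hm) j.
      by rewrite dfwith_in /c /= ltnn leqnn.
    by rewrite dfwith_out // ltS_neq // eq_sym.
  by rewrite phiX (dfwith_id c (Ordinal hm)) (IH (ltnW mk)) expnSr mulrnA.
have E : (fun j => g j ^+ e)%g = (fun j : 'I_k => if (j < k)%N then g j ^+ e else g j)%g.
  by apply: functional_extensionality_dep => j; rewrite ltn_ord.
exact: (eq_trans (f_equal phi E) (H k (leqnn k))).
Qed.
End Phi.


Section Phi2.
Variable k : nat.
Variable gT : 'I_k -> finGroupType.
Variable V : zmodType.
Variable phi : (forall i, gT i) -> V.
Hypothesis hk : (0 < k)%N.
Hypothesis Hm : multihom phi.

Let i0 : 'I_k := Ordinal hk.

Definition mix (f c : forall i, gT i) m : forall i, gT i :=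
  fun j => if (j < m)%N then f j else c j.

Lemma mix_step (f c : forall i, gT i) m (hm : (m < k)%N) :
  mix f (dfwith c (f (Ordinal hm))) m = mix f c m.+1.
Proof.
apply: functional_extensionality_dep => j; rewrite /mix.
have [<-|ne] := eqVneq (Ordinal hm) j.
  by rewrite /= ltnn leqnn dfwith_in.
by rewrite dfwith_out // ltS_neq // eq_sym.
Qed.

Lemma mix_one (f c : forall i, gT i) : mix f c 1 = dfwith c (f i0).
Proof.
apply: functional_extensionality_dep => j; rewrite /mix.
have [<-|ne] := eqVneq i0 j; first by rewrite dfwith_in.
rewrite dfwith_out //.
have -> : (j < 1)%N = false.
  by apply/negbTE; apply: contra ne; rewrite ltnS leqn0 => /eqP e; apply/eqP/val_inj.
done.
Qed.

Lemma expand (a b : forall i, gT i) P Q : coprime P Q ->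
  (forall j, (a j ^+ P = 1)%g) -> (forall j, (b j ^+ Q = 1)%g) ->
  phi (fun j => a j * b j)%g = phi a + phi b.
Proof.
move=> cop Ha Hb.
have T : forall m, (0 < m)%N -> (m <= k)%N -> forall c : forall i, gT i,
    (forall j : 'I_k, (j < m)%N -> c j = (a j * b j)%g) ->
    phi c = phi (mix a c m) + phi (mix b c m).
  elim=> [//|m IH] _ mk c Hc.
  have hm : (m < k)%N := mk.
  set im := Ordinal hm.
  have Ec : c = dfwith c (a im * b im)%g by rewrite -(Hc im (leqnn _)) dfwith_id.
  rewrite {1}Ec (@Hm im c (a im) (b im)).
  have [m0|m0] := posnP m.
    have E : im = i0 by apply: val_inj; rewrite /= m0.
    by rewrite E m0 !mix_one.
  have pre : forall x : gT im, forall j : 'I_k, (j < m)%N -> dfwith c x j = (a j * b j)%g.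
    move=> x j jm; rewrite dfwith_out; first by apply: Hc; exact: ltnW jm.
    by apply/eqP => e; move: jm; rewrite -e /= ltnn.
  rewrite (IH m0 (ltnW mk) _ (pre (a im))) (IH m0 (ltnW mk) _ (pre (b im))).
  rewrite !mix_step.
  have v1 : phi (mix b (dfwith c (a im)) m) = 0.
    apply: (vanish (j0 := i0) (j1 := im) (P := Q) (Q := P) Hm); last by rewrite coprime_sym.
      by rewrite /mix /= m0; exact: Hb.
    by rewrite /mix /= ltnn dfwith_in; exact: Ha.
  have v2 : phi (mix a (dfwith c (b im)) m) = 0.
    apply: (vanish (j0 := i0) (j1 := im) (P := P) (Q := Q) Hm) => //.
      by rewrite /mix /= m0; exact: Ha.
    by rewrite /mix /= ltnn dfwith_in; exact: Hb.
  by rewrite v1 v2 addr0 add0r.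
have E1 : mix a (fun j => a j * b j)%g k = a.
  by apply: functional_extensionality_dep => j; rewrite /mix ltn_ord.
have E2 : mix b (fun j => a j * b j)%g k = b.
  by apply: functional_extensionality_dep => j; rewrite /mix ltn_ord.
by rewrite (T k hk (leqnn k) _ (fun j _ => erefl)) E1 E2.
Qed.

Lemma Xcomb d1 d2 x y : good (NN gT) d1 -> good (NN gT) d2 -> coprime d1 d2 ->
  image_set phi x -> x *+ d1 = 0 -> image_set phi y -> y *+ d2 = 0 ->
  image_set phi (x + y).
Proof.
move=> [e1 [em1 Nd1]] [e2 [em2 Nd2]] cop [g gx] xd [h hy] yd.
pose a := (fun j => g j ^+ e1)%g; pose b := (fun j => h j ^+ e2)%g.
have Ha : forall j, (a j ^+ d1 = 1)%g.
  by move=> j; rewrite /a -expgM; apply: expg_dvd (expN _) _; rewrite mulnC.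
have Hb : forall j, (b j ^+ d2 = 1)%g.
  by move=> j; rewrite /b -expgM; apply: expg_dvd (expN _) _; rewrite mulnC.
have pa : phi a = x.
  rewrite /a (phi_pow Hm) gx -{2}(mulr1n x); apply: (killed_mod xd).
  by rewrite -modnXm em1 modnXm exp1n.
have pb : phi b = y.
  rewrite /b (phi_pow Hm) hy -{2}(mulr1n y); apply: (killed_mod yd).
  by rewrite -modnXm em2 modnXm exp1n.
exists (fun j => a j * b j)%g; rewrite (expand cop Ha Hb) pa pb //.
Qed.

End Phi2.

Theorem proposition6p1 (k r : nat) (gT : 'I_k -> finGroupType) (V : zmodType)
  (phi : (forall i, gT i) -> V) :
  (0 < k)%N -> (0 < r)%N ->
  (forall i, nilpotent [set: gT i]) ->
  rank_le V r ->
  multihom phi ->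
  forall v, gen_subgroup (image_set phi) v -> prod_set (image_set phi) r v.
Proof.
move=> hk _ _ [s [szs Hs]] Hm v Gv.
have Hs' : forall v, span s v.
  move=> w; apply: (gen_min (G := span s)) (Hs w); first exact: span_subgrp.
  by move=> x xs; exact: span_mem.
apply: (abstract_main (N := NN gT) (s := s)) Gv.
- exact: NN0.
- exact: X0 hk Hm.
- by move=> x z Xx; exact: (Xz hk Hm z Xx).
- by move=> x Xx; exact: (XN hk Hm Xx).
- exact: szs.
- exact: Hs'.
- move=> d1 d2 x y g1 g2 cop Xx xd Xy yd; exact: (Xcomb hk Hm g1 g2 cop Xx xd Xy yd).
Qed.
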